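(* Let $Y$ be a set of vectors in a finite-dimensional real vector space which is disconnected, with decomposition $(Y_1,Y_2)$, and suppose that for each $i\in\{1,2\}$, every triple of vectors in $Y_i$ is contained in a full subset of $Y_i$ every subset of which is clean. Then every triple of vectors in $Y$ is contained in a full subset of $Y$ every subset of which is clean.
   Context: $\mathrm{Span}_+$ denotes nonnegative linear combinations. For a set $Z$ of vectors and $B\subseteq Z$: $B$ is closed in $Z$ if $\alpha,\beta\in B$, $\gamma\in\mathrm{Span}_+(\alpha,\beta)\cap Z$ imply $\gamma\in B$; coclosed if $Z\setminus B$ is closed; biclosed if both; weakly separable in $Z$ if $\mathrm{Span}_+(B)\cap\mathrm{Span}_+(Z\setminus B)=\{0\}$. $Z$ is clean if every subset biclosed in $Z$ is weakly separable in $Z$. A subset $F\subseteq Y$ is full in $Y$ if $F\cap\mathrm{Span}\{\alpha,\beta\}=Y\cap\mathrm{Span}\{\alpha,\beta\}$ for all $\alpha,\beta\in F$. $Y$ is disconnected if $Y=Y_1\sqcup Y_2$ with $Y_1,Y_2$ nonempty and both full in $Y$; $(Y_1,Y_2)$ is then a decomposition of $Y$. *)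

(* Defs.v *)
From mathcomp Require Import all_boot all_order all_algebra.
From mathcomp Require Import reals.
Set Implicit Arguments. Unset Strict Implicit. Unset Printing Implicit Defensive.
Import Order.TTheory GRing.Theory Num.Theory.
Local Open Scope ring_scope.

Section Defs.
Variables (R : realType) (n : nat).
Notation V := 'rV[R]_n.
Definition vset := V -> Prop.

Definition subset_of (A B : vset) := forall v, A v -> B v.
Definition setminus (A B : vset) : vset := fun v => A v /\ ~ B v.

Definition spanp (B : vset) (v : V) : Prop :=
  exists (m : nat) (f : 'I_m -> V) (c : 'I_m -> R),
    (forall i, B (f i)) /\ (forall i, 0 <= c i) /\ v = \sum_(i < m) c i *: f i.

Definition spanp2 (a b v : V) : Prop :=
  exists x y : R, 0 <= x /\ 0 <= y /\ v = x *: a + y *: b.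

Definition span2 (a b v : V) : Prop :=
  exists x y : R, v = x *: a + y *: b.

Definition closed_in (Z B : vset) : Prop :=
  forall a b g, B a -> B b -> Z g -> spanp2 a b g -> B g.

Definition coclosed_in (Z B : vset) : Prop := closed_in Z (setminus Z B).

Definition biclosed_in (Z B : vset) : Prop :=
  subset_of B Z /\ closed_in Z B /\ coclosed_in Z B.

Definition weakly_separable_in (Z B : vset) : Prop :=
  forall v, spanp B v -> spanp (setminus Z B) v -> v = 0.

Definition clean (Z : vset) : Prop :=
  forall B, biclosed_in Z B -> weakly_separable_in Z B.

Definition full_in (Y F : vset) : Prop :=
  subset_of F Y /\
  forall a b, F a -> F b -> forall v, (F v /\ span2 a b v) <-> (Y v /\ span2 a b v).

Definition decomposition (Y Y1 Y2 : vset) : Prop :=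
  (forall v, Y v <-> (Y1 v \/ Y2 v)) /\ (forall v, ~ (Y1 v /\ Y2 v)) /\
  (exists v, Y1 v) /\ (exists v, Y2 v) /\ full_in Y Y1 /\ full_in Y Y2.

Definition disconnected (Y : vset) : Prop :=
  exists Y1 Y2, decomposition Y Y1 Y2.

Definition triple_clean_property (Y : vset) : Prop :=
  forall a b c, Y a -> Y b -> Y c ->
    exists F : vset, full_in Y F /\ F a /\ F b /\ F c /\
      forall S : vset, subset_of S F -> clean S.
End Defs.

(* Main.v *)
Require Import Defs.
From mathcomp Require Import all_boot all_order all_algebra.
From mathcomp Require Import reals.
From Stdlib Require Import Classical.
Set Implicit Arguments. Unset Strict Implicit. Unset Printing Implicit Defensive.
Import Order.TTheory GRing.Theory Num.Theory.
Local Open Scope ring_scope.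

Section H.
Variables (R : realType) (n : nat).
Notation V := 'rV[R]_n.
Implicit Types (B S Y F : vset R n) (a b x y u w v p l : V).

Lemma spanp_ind B (P : V -> Prop) :
  P 0 -> (forall x t u, B x -> 0 <= t -> P u -> P (u + t *: x)) ->
  forall v, spanp B v -> P v.
Proof.
move=> P0 PS v [m [f [c [Hf [Hc ->]]]]].
elim: m f c Hf Hc => [|m IH] f c Hf Hc; first by rewrite big_ord0.
rewrite big_ord_recr /=; apply: PS => //.
exact: (IH (fun i => f (widen_ord (leqnSn m) i)) (fun i => c (widen_ord (leqnSn m) i))).
Qed.

Lemma spanp0 B : spanp B 0.
Proof.
exists 0%N, (fun _ => 0), (fun _ => 0); split; first by case.
by split; [case|rewrite big_ord0].
Qed.

Lemma spanp_add B u w : spanp B u -> spanp B w -> spanp B (u + w).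
Proof.
move=> [m1 [f1 [c1 [Hf1 [Hc1 ->]]]]] [m2 [f2 [c2 [Hf2 [Hc2 ->]]]]].
exists (m1 + m2)%N, (fun i => match split i with inl j => f1 j | inr j => f2 j end),
  (fun i => match split i with inl j => c1 j | inr j => c2 j end).
split; [|split].
- by move=> i; case: split.
- by move=> i; case: split.
- rewrite big_split_ord /=.
  congr (_ + _); apply: eq_bigr => i _.
  + by rewrite (unsplitK (inl i : 'I_m1 + 'I_m2)).
  + by rewrite (unsplitK (inr i : 'I_m1 + 'I_m2)).
Qed.

Lemma spanp_single B x t : B x -> 0 <= t -> spanp B (t *: x).
Proof.
move=> Bx t0; exists 1%N, (fun _ => x), (fun _ => t); split => //; split => //.
by rewrite big_ord1.
Qed.

Lemma spanp_mono B B' v : subset_of B B' -> spanp B v -> spanp B' v.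
Proof.
move=> sBB' [m [f [c [Hf [Hc ->]]]]]; exists m, f, c; split => // i; exact: sBB'.
Qed.

Lemma spanp_split B (Q : V -> Prop) v : spanp B v ->
  exists p l, spanp (fun x => B x /\ Q x) p /\ spanp (fun x => B x /\ ~ Q x) l /\ v = p + l.
Proof.
move: v; apply: (spanp_ind (P := fun v => exists p l, spanp (fun x => B x /\ Q x) p /\ spanp (fun x => B x /\ ~ Q x) l /\ v = p + l)); first by exists 0, 0; split; [exact: spanp0|split; [exact: spanp0|rewrite addr0]].
move=> x t u Bx t0 [p [l [Hp [Hl ->]]]].
case: (classic (Q x)) => Qx.
- exists (p + t *: x), l; split; [apply: spanp_add => //; exact: spanp_single|split=>//].
  by rewrite addrAC.
- exists p, (l + t *: x); split => //; split; [apply: spanp_add => //; exact: spanp_single|].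
  by rewrite addrA.
Qed.

Lemma span2_add a b u w : span2 a b u -> span2 a b w -> span2 a b (u + w).
Proof.
move=> [x1 [y1 ->]] [x2 [y2 ->]]; exists (x1 + x2), (y1 + y2).
by rewrite !scalerDl addrACA.
Qed.

Lemma span2_scale a b t u : span2 a b u -> span2 a b (t *: u).
Proof. move=> [x1 [y1 ->]]; exists (t * x1), (t * y1); by rewrite scalerDr !scalerA. Qed.

Lemma span2_0 a b : span2 a b 0.
Proof. by exists 0, 0; rewrite !scale0r addr0. Qed.

Lemma span2_trans a b x y v : span2 a b x -> span2 a b y -> span2 x y v -> span2 a b v.
Proof.
move=> Hx Hy [s [t ->]]; apply: span2_add; exact: span2_scale.
Qed.

Lemma span2_sym x y v : span2 x y v -> span2 y x v.
Proof. by move=> [s [t ->]]; exists t, s; rewrite addrC. Qed.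

Lemma span2_l x y : span2 x y x.
Proof. by exists 1, 0; rewrite scale1r scale0r addr0. Qed.
Lemma span2_r x y : span2 x y y.
Proof. by exists 0, 1; rewrite scale1r scale0r add0r. Qed.

Lemma spanp_span2 B a b v : (forall x, B x -> span2 a b x) -> spanp B v -> span2 a b v.
Proof.
move=> H; move: v; apply: (spanp_ind (P := span2 a b)); first exact: span2_0.
move=> x t u Bx _ Hu; apply: span2_add => //; apply: span2_scale; exact: H.
Qed.

Lemma span2_cross x y v s t : v = s *: x + t *: y -> t != 0 -> span2 v x y.
Proof.
move=> Hv t0; exists t^-1, (- (t^-1 * s)).
rewrite Hv scalerDr !scalerA scaleNr addrAC -scalerA subrr add0r mulVf //.
by rewrite scale1r.
Qed.


Lemma full_trans Y (Y1 : vset R n) F : full_in Y Y1 -> full_in Y1 F -> full_in Y F.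
Proof.
move=> [s1 h1] [s2 h2]; split; first by move=> v /s2 /s1.
move=> a b Fa Fb v; rewrite h2 //; apply: h1; exact: s2.
Qed.

Lemma decomposition_sym Y (Y1 Y2 : vset R n) : decomposition Y Y1 Y2 -> decomposition Y Y2 Y1.
Proof.
move=> [HY [Hd [e1 [e2 [f1 f2]]]]]; split; [|split; [|by []]].
- by move=> v; rewrite HY; tauto.
- by move=> v [? ?]; apply: (Hd v).
Qed.

Lemma restrict_biclosed S B (Q : V -> Prop) : biclosed_in S B ->
  biclosed_in (fun x => S x /\ Q x) (fun x => B x /\ Q x).
Proof.
move=> [sub [cl co]]; split; [|split].
- by move=> x [/sub ? ?].
- move=> x y g [Bx Qx] [By Qy] [Sg Qg] sp; split => //; exact: (cl x y g).
- move=> x y g [[Sx Qx] nx] [[Sy Qy] ny] [Sg Qg] sp; split => //.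
  move=> [Bg _]; have := co x y g; rewrite /setminus => H.
  by case: (H (conj Sx (fun hb => nx (conj hb Qx))) (conj Sy (fun hb => ny (conj hb Qy))) Sg sp).
Qed.

Lemma direct a b c p1 p2 l1 l2 : ~ span2 a b c -> span2 a b p1 -> span2 a b p2 ->
  span2 c c l1 -> span2 c c l2 -> p1 + l1 = p2 + l2 -> p1 = p2 /\ l1 = l2.
Proof.
move=> nc h1 h2 [x1 [y1 ->]] [x2 [y2 ->]] E.
rewrite -!scalerDl in E *.
have E2 : p1 - p2 = ((x2 + y2) - (x1 + y1)) *: c.
  by rewrite scalerBl -[p1](addrK ((x1 + y1) *: c)) E addrAC [p2 + _]addrC addrK.
have [Z|NZ] := eqVneq ((x2 + y2) - (x1 + y1)) 0.
  move: E2; rewrite Z scale0r => /eqP; rewrite subr_eq0 => /eqP ->; split => //.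
  by move/eqP: Z; rewrite subr_eq0 => /eqP ->.
exfalso; apply: nc.
have -> : c = ((x2 + y2) - (x1 + y1))^-1 *: (p1 - p2).
  by rewrite E2 scalerA mulVf // scale1r.
apply: span2_scale; apply: span2_add => //; rewrite -scaleN1r; exact: span2_scale.
Qed.

Lemma mixed Y (Y1 Y2 : vset R n) a b c : decomposition Y Y1 Y2 ->
  triple_clean_property Y1 -> triple_clean_property Y2 ->
  Y1 a -> Y1 b -> Y2 c ->
  exists F : vset R n, full_in Y F /\ F a /\ F b /\ F c /\
      forall S : vset R n, subset_of S F -> clean S.
Proof.
move=> [HY [Hd [_ [_ [[s1 H1] [s2 H2]]]]]] T1 T2 a1 b1 c2.
have [G1 [[g1s g1H] [G1a [G1b [_ G1c]]]]] := T1 a b b a1 b1 b1.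
have [G2 [[g2s g2H] [G2c [_ [_ G2cl]]]]] := T2 c c c c2 c2 c2.
have Y1in : forall x, Y x -> span2 a b x -> Y1 x.
  by move=> x Yx sp; case: (proj2 (H1 a b a1 b1 x) (conj Yx sp)).
have Y2in : forall x, Y x -> span2 c c x -> Y2 x.
  by move=> x Yx sp; case: (proj2 (H2 c c c2 c2 x) (conj Yx sp)).
have nc : ~ span2 a b c.
  by move=> sp; apply: (Hd c); split => //; apply: Y1in => //; exact: s2.
pose F := fun x => Y x /\ (span2 a b x \/ span2 c c x).
have K : forall x y, F x -> F y -> span2 a b x -> span2 c c y ->
    forall v, Y v -> span2 x y v -> F v.
  move=> x y [Yx _] [Yy _] ax cy v Yv [s [t Ev]].
  have x1 := Y1in x Yx ax; have y2 := Y2in y Yy cy.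
  case/HY: (Yv) => [v1|v2].
  - have [t0|tn0] := eqVneq t 0.
      split => //; left; rewrite Ev t0 scale0r addr0; exact: span2_scale.
    exfalso; apply: (Hd y); split => //.
    by case: (proj2 (H1 v x v1 x1 y) (conj Yy (span2_cross Ev tn0))).
  - have [s0|sn0] := eqVneq s 0.
      split => //; right; rewrite Ev s0 scale0r add0r; exact: span2_scale.
    exfalso; apply: (Hd x); split => //.
    have Ev' : v = t *: y + s *: x by rewrite addrC.
    by case: (proj2 (H2 v y v2 y2 x) (conj Yx (span2_cross Ev' sn0))).
exists F; split; [split|split; [|split; [|split]]].
- by move=> v [].
- move=> x y Fx Fy v; split; first by move=> [[Yv _] sp].
  move=> [Yv sp]; split => //.
  case: (Fx) => _ [ax|cx]; case: (Fy) => _ [ay|cy].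
  + by split => //; left; exact: (span2_trans ax ay sp).
  + exact: (K x y Fx Fy ax cy v Yv sp).
  + exact: (K y x Fy Fx ay cx v Yv (span2_sym sp)).
  + by split => //; right; exact: (span2_trans cx cy sp).
- by split; [apply: s1|left; exact: span2_l].
- by split; [apply: s1|left; exact: span2_r].
- by split; [apply: s2|right; exact: span2_l].
move=> S SF B Bbi v vB vC.
have [p1 [l1 [hp1 [hl1 E1]]]] := spanp_split Y1 vB.
have [p2 [l2 [hp2 [hl2 E2]]]] := spanp_split Y1 vC.
have FY1 : forall x, S x -> Y1 x -> span2 a b x.
  move=> x /SF [Yx [//|cx]] x1; exfalso; apply: (Hd x); split => //; exact: Y2in.
have FY2 : forall x, S x -> ~ Y1 x -> span2 c c x /\ Y2 x.
  move=> x /SF [Yx [ax|cx]] nx; first by exfalso; apply: nx; exact: Y1in.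
  by split => //; case/HY: Yx.
have [ep el] : p1 = p2 /\ l1 = l2.
  apply: (direct nc _ _ _ _ (etrans (esym E1) E2)).
  - apply: (spanp_span2 _ hp1) => x [Bx x1]; apply: FY1 => //; exact: Bbi.1.
  - by apply: (spanp_span2 _ hp2) => x [[Sx _] x1]; apply: FY1.
  - by apply: (spanp_span2 _ hl1) => x [Bx x1]; case: (FY2 x (Bbi.1 x Bx) x1).
  - by apply: (spanp_span2 _ hl2) => x [[Sx _] x1]; case: (FY2 x Sx x1).
have cl1 : clean (fun x => S x /\ Y1 x).
  apply: G1c => x [Sx x1]; have ax := FY1 x Sx x1.
  by case: (proj2 (g1H a b G1a G1b x) (conj x1 ax)).
have cl2 : clean (fun x => S x /\ ~ Y1 x).
  apply: G2cl => x [Sx x1]; have [cx x2] := FY2 x Sx x1.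
  by case: (proj2 (g2H c c G2c G2c x) (conj x2 cx)).
have p0 : p1 = 0.
  apply: (cl1 _ (restrict_biclosed Y1 Bbi)) => //; rewrite ep.
  by apply: (spanp_mono _ hp2) => x [[Sx nB] x1]; split => //; move=> [].
have l0 : l1 = 0.
  apply: (cl2 _ (restrict_biclosed (fun x => ~ Y1 x) Bbi)) => //; rewrite el.
  by apply: (spanp_mono _ hl2) => x [[Sx nB] x1]; split => //; move=> [].
by rewrite E1 p0 l0 addr0.
Qed.

Lemma same Y (Y1 Y2 : vset R n) a b c : decomposition Y Y1 Y2 ->
  triple_clean_property Y1 -> Y1 a -> Y1 b -> Y1 c ->
  exists F : vset R n, full_in Y F /\ F a /\ F b /\ F c /\
      forall S : vset R n, subset_of S F -> clean S.
Proof.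
move=> [_ [_ [_ [_ [f1 _]]]]] T a1 b1 c1.
have [F [fF rest]] := T a b c a1 b1 c1.
exists F; split => //; exact: full_trans f1 fF.
Qed.

End H.

Theorem lemma5p2 (R : realType) (n : nat) (Y Y1 Y2 : vset R n) :
  decomposition Y Y1 Y2 ->
  triple_clean_property Y1 -> triple_clean_property Y2 ->
  triple_clean_property Y.
Proof.
move=> D T1 T2 a b c Ya Yb Yc.
have D' := decomposition_sym D.
have HY := D.1.
case/HY: Ya => a1; case/HY: Yb => b1; case/HY: Yc => c1.
- exact: same D T1 a1 b1 c1.
- exact: mixed D T1 T2 a1 b1 c1.
- have [F [f [Fa [Fc [Fb r]]]]] := mixed D T1 T2 a1 c1 b1; by exists F.
- have [F [f [Fb [Fc [Fa r]]]]] := mixed D' T2 T1 b1 c1 a1; by exists F.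
- have [F [f [Fb [Fc [Fa r]]]]] := mixed D T1 T2 b1 c1 a1; by exists F.
- have [F [f [Fa [Fc [Fb r]]]]] := mixed D' T2 T1 a1 c1 b1; by exists F.
- exact: mixed D' T2 T1 a1 b1 c1.
- exact: same D' T2 a1 b1 c1.
Qed.
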